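(* Assume (A1), (A2), (A3) below, let $r\in\mathcal R_\epsilon$, $x_0\in\mathcal D_x(r)$, let $p$ be the fixed planned path, and consider the closed-loop PathFG+MPC trajectory $s_{k+1}=g(\xi^*_{N|k})$, $x_{k+1}=f(x_k,\tilde\kappa(x_k,s_k))$, where $\xi^*_{N|k}=\tilde\xi_N^*(x_k,s_k)$. Then there exist $\delta>0$ and $\alpha>0$ such that for every $k$ with $\|\xi^*_{N|k}-\tilde x_{s_k}\|\le\delta$ (i.e. $(\xi^*_{N|k},p(s_k))\in\mathcal B_\delta(\Sigma)$): $s_{k+1}-s_k\ge\alpha$ if $1-s_k>\alpha$, and $s_{k+1}=1$ if $1-s_k\le\alpha$.
   Context: System: $x_{k+1}=f(x_k,u_k)$, $x_k\in\mathbb R^{n_x}$, $u_k\in\mathbb R^{n_u}$, with $\mathcal X=\{x:h_x(x)\le0\}$, $\mathcal U=\{u:h_u(u)\le0\}$. (A1) $f$ is locally Lipschitz, $h_x,h_u$ are continuous, and there are a set $\mathcal R\subseteq\mathbb R^{n_r}$ and continuous maps $r\mapsto\bar x_r\in\mathcal X$, $r\mapsto\bar u_r\in\mathcal U$ with $\bar x_r=f(\bar x_r,\bar u_r)$. For fixed $\epsilon>0$, $\mathcal R_\epsilon=\{r\in\mathcal R:h_x(\bar x_r)\le-\epsilon,\ h_u(\bar u_r)\le-\epsilon\}$. MPC: horizon $N\in\mathbb N_{>0}$, stage cost $\ell:\mathcal X\times\mathcal U\times\mathcal R_\epsilon\to\mathbb R_{\ge0}$, terminal set $\mathcal T\subseteq\mathcal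 X\times\mathcal R$, terminal cost $V:\mathcal T\to\mathbb R_{\ge0}$. The OCP at $(x,r)$: minimize $V(\xi_N,r)+\sum_{i=0}^{N-1}\ell(\xi_i,\mu_i,r)$ subject to $\xi_0=x$, $\xi_{i+1}=f(\xi_i,\mu_i)$, $\xi_i\in\mathcal X$, $\mu_i\in\mathcal U$ ($i=0,\dots,N-1$), $(\xi_N,r)\in\mathcal T$. $\Gamma=\{(x,r)\in\mathcal X\times\mathcal R_\epsilon:$ OCP feasible$\}$; $\zeta^*(x,r)=(\xi_0^*,\dots,\xi_N^*,\mu_0^*,\dots,\mu_{N-1}^* )$ is the minimizer (treated as a function), $\xi_N^*(x,r)$ its final state, $\kappa(x,r)=\mu_0^*(x,r)$. (A2) (a) $\ell$ uniformly continuous, $\ell(\bar x_r,\bar u_r,r)=0$, $\ell(x,u,r)\ge\gamma_\ell(\|x-\bar x_r\|)$ for some $\gamma_\ell\in\mathcal K_\infty$, all $(x,r)\in\Gamma$, $u\in\mathcal U$. (b) $V$ uniformly continuous, $V(\bar x_r,r)=0$, $V\ge0$ on $\mathcal T$, and some $\kappa_T:\mathcal T\to\mathcal U$ satisfies $V(f(x,\kappa_T(x,r)),r)-V(x,r)\le-\ell(x,\kappa_T(x,r),r)$ on $\mathcal T$. (c) $(x,r)\in\mathcal T\Rightarrow(f(x,\kappa_T(x,r)),r)\in\mathcal T$, $x\in\mathcal X$, $\kappa_T(x,r)\in\mathcal U$. (d) $(\bar x_r,r)\in\operatorname{int}\mathcal T$ for all $r\in\mathcal R_\epsilon$. (e)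 $\zeta^*$ is Lipschitz continuous. Paths: a feasible path for $(x_0,r)$, $r\in\mathcal R_\epsilon$, is $\{p(s):s\in[0,1]\}$ with $p:[0,1]\to\mathcal R_\epsilon$ continuous, $(x_0,p(0))\in\Gamma$, $p(1)=r$; $\mathcal D_x(r)$ is the set of $x_0$ for which such a path exists. (A3) For such $(x_0,r)$ the planner returns a feasible path. With $p$ fixed: $\tilde x_s=\bar x_{p(s)}$, $\tilde{\mathcal T}=\{(x,s):(x,p(s))\in\mathcal T\}$, $\tilde\xi_N^*(x,s)=\xi_N^*(x,p(s))$, $\tilde\kappa(x,s)=\kappa(x,p(s))$, and $g(\xi)=\max\{s\in[0,1]:(\xi,s)\in\tilde{\mathcal T}\}$. $\Sigma=\{(\tilde x_s,p(s)):s\in[0,1]\}$ and $\mathcal B_\delta(\Sigma)=\{(x,p(s)):\|x-\tilde x_s\|\le\delta,\ s\in[0,1]\}$. *)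

(* Defs.v *)
From mathcomp Require Import all_boot all_order all_algebra.
From mathcomp Require Import reals.
Set Implicit Arguments. Unset Strict Implicit. Unset Printing Implicit Defensive.
Import Order.TTheory GRing.Theory Num.Theory.
Local Open Scope ring_scope.

Section Defs.
Variable R : realType.

Definition enorm (n : nat) (v : 'rV[R]_n) : R :=
  Num.sqrt (\sum_(i < n) (v ord0 i) ^+ 2).

Definition vle (m : nat) (v : 'rV[R]_m) (c : R) : Prop := forall i, v ord0 i <= c.

Definition K_inf (g : R -> R) : Prop :=
  g 0 = 0 /\
  (forall a b, 0 <= a -> a < b -> g a < g b) /\
  (forall a, 0 <= a -> forall e, 0 < e -> exists2 d, 0 < d &
      forall b, 0 <= b -> `|a - b| < d -> `|g a - g b| < e) /\
  (forall M, exists a, 0 <= a /\ M < g a).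

Definition vcontinuous (n m : nat) (h : 'rV[R]_n -> 'rV[R]_m) : Prop :=
  forall x e, 0 < e -> exists2 d, 0 < d &
    forall y, enorm (x - y) < d -> enorm (h x - h y) < e.

Definition vcontinuous_on (n m : nat) (D : 'rV[R]_n -> Prop)
    (h : 'rV[R]_n -> 'rV[R]_m) : Prop :=
  forall x, D x -> forall e, 0 < e -> exists2 d, 0 < d &
    forall y, D y -> enorm (x - y) < d -> enorm (h x - h y) < e.

Definition loc_lipschitz (nx nu : nat) (f : 'rV[R]_nx -> 'rV[R]_nu -> 'rV[R]_nx) :=
  forall x u, exists e, exists L, 0 < e /\ forall x1 u1 x2 u2,
    enorm (x1 - x) + enorm (u1 - u) < e -> enorm (x2 - x) + enorm (u2 - u) < e ->
    enorm (f x1 u1 - f x2 u2) <= L * (enorm (x1 - x2) + enorm (u1 - u2)).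

Section MPC.
Variables (nx nu nr mx mu : nat).
Variable f : 'rV[R]_nx -> 'rV[R]_nu -> 'rV[R]_nx.
Variables (hx : 'rV[R]_nx -> 'rV[R]_mx) (hu : 'rV[R]_nu -> 'rV[R]_mu).
Variable Rset : 'rV[R]_nr -> Prop.
Variables (xbar : 'rV[R]_nr -> 'rV[R]_nx) (ubar : 'rV[R]_nr -> 'rV[R]_nu).
Variable eps : R.

Definition Xset (x : 'rV[R]_nx) : Prop := vle (hx x) 0.
Definition Uset (u : 'rV[R]_nu) : Prop := vle (hu u) 0.

Definition A1 : Prop :=
  loc_lipschitz f /\ vcontinuous hx /\ vcontinuous hu /\
  vcontinuous_on Rset xbar /\ vcontinuous_on Rset ubar /\
  (forall r, Rset r -> Xset (xbar r) /\ Uset (ubar r) /\ xbar r = f (xbar r) (ubar r)).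

Definition Reps (r : 'rV[R]_nr) : Prop :=
  Rset r /\ vle (hx (xbar r)) (- eps) /\ vle (hu (ubar r)) (- eps).

Variable N : nat.
Variable ell : 'rV[R]_nx -> 'rV[R]_nu -> 'rV[R]_nr -> R.
Variable Tset : 'rV[R]_nx -> 'rV[R]_nr -> Prop.
Variable V : 'rV[R]_nx -> 'rV[R]_nr -> R.

(* A candidate of the OCP: state sequence xi_0..xi_N, input sequence mu_0..mu_{N-1} *)
Definition traj : Type := ((nat -> 'rV[R]_nx) * (nat -> 'rV[R]_nu))%type.

Definition ocp_feasible (x : 'rV[R]_nx) (r : 'rV[R]_nr) (z : traj) : Prop :=
  z.1 0%N = x /\
  (forall i, (i < N)%N ->
     z.1 i.+1 = f (z.1 i) (z.2 i) /\ Xset (z.1 i) /\ Uset (z.2 i)) /\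
  Tset (z.1 N) r.

Definition ocp_cost (r : 'rV[R]_nr) (z : traj) : R :=
  V (z.1 N) r + \sum_(i < N) ell (z.1 i) (z.2 i) r.

Definition Gamma (x : 'rV[R]_nx) (r : 'rV[R]_nr) : Prop :=
  Xset x /\ Reps r /\ exists z, ocp_feasible x r z.

Definition is_minimizer (zeta : 'rV[R]_nx -> 'rV[R]_nr -> traj) : Prop :=
  forall x r, Gamma x r ->
    ocp_feasible x r (zeta x r) /\
    forall z, ocp_feasible x r z -> ocp_cost r (zeta x r) <= ocp_cost r z.

Definition in_int_T (x : 'rV[R]_nx) (r : 'rV[R]_nr) : Prop :=
  exists2 e, 0 < e & forall x' r', enorm (x' - x) + enorm (r' - r) < e -> Tset x' r'.

Definition A2 (zeta : 'rV[R]_nx -> 'rV[R]_nr -> traj) : Prop :=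
  (forall x u r, Xset x -> Uset u -> Reps r -> 0 <= ell x u r) /\
  (forall e, 0 < e -> exists2 d, 0 < d & forall x u r x' u' r',
     Xset x -> Uset u -> Reps r -> Xset x' -> Uset u' -> Reps r' ->
     enorm (x - x') + enorm (u - u') + enorm (r - r') < d ->
     `|ell x u r - ell x' u' r'| < e) /\
  (forall r, Reps r -> ell (xbar r) (ubar r) r = 0) /\
  (exists gl, K_inf gl /\ forall x r u, Gamma x r -> Uset u ->
     gl (enorm (x - xbar r)) <= ell x u r) /\
  (forall e, 0 < e -> exists2 d, 0 < d & forall x r x' r',
     Tset x r -> Tset x' r' -> enorm (x - x') + enorm (r - r') < d ->
     `|V x r - V x' r'| < e) /\
  (forall r, Reps r -> V (xbar r) r = 0) /\
  (forall x r, Tset x r -> 0 <= V x r) /\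
  (exists kT : 'rV[R]_nx -> 'rV[R]_nr -> 'rV[R]_nu,
     forall x r, Tset x r ->
       V (f x (kT x r)) r - V x r <= - ell x (kT x r) r /\
       Tset (f x (kT x r)) r /\ Xset x /\ Uset (kT x r)) /\
  (forall r, Reps r -> in_int_T (xbar r) r) /\
  (exists L, forall x r x' r', Gamma x r -> Gamma x' r' ->
     \sum_(i < N.+1) enorm ((zeta x r).1 i - (zeta x' r').1 i) +
     \sum_(i < N) enorm ((zeta x r).2 i - (zeta x' r').2 i)
     <= L * (enorm (x - x') + enorm (r - r'))).

Definition feasible_path (x0 : 'rV[R]_nx) (r : 'rV[R]_nr) (p : R -> 'rV[R]_nr) : Prop :=
  (forall s, 0 <= s <= 1 -> forall e, 0 < e -> exists2 d, 0 < d &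
     forall s', 0 <= s' <= 1 -> `|s - s'| < d -> enorm (p s - p s') < e) /\
  (forall s, 0 <= s <= 1 -> Reps (p s)) /\
  Gamma x0 (p 0) /\ p 1 = r.

Definition Dx (r : 'rV[R]_nr) (x0 : 'rV[R]_nx) : Prop :=
  exists p, feasible_path x0 r p.

Definition is_g (p : R -> 'rV[R]_nr) (xi : 'rV[R]_nx) (s' : R) : Prop :=
  (0 <= s' <= 1) /\ Tset xi (p s') /\
  (forall s, 0 <= s <= 1 -> Tset xi (p s) -> s <= s').

End MPC.
End Defs.

(* Main.v *)
Require Import Defs.
From mathcomp Require Import all_boot all_order all_algebra.
From mathcomp Require Import reals.
From mathcomp Require Import ring lra.
From mathcomp Require Import all_classical all_reals all_analysis.
Import Order.TTheory GRing.Theory Num.Theory.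
Import numFieldNormedType.Exports.
Local Open Scope ring_scope.

Section Norm.
Variable R : realType.

Lemma CS n (a b : 'I_n -> R) :
  (\sum_i a i * b i) ^+ 2 <= (\sum_i a i ^+ 2) * (\sum_i b i ^+ 2).
Proof.
rewrite -subr_ge0.
have E : 2 * ((\sum_i a i ^+ 2) * (\sum_i b i ^+ 2) - (\sum_i a i * b i) ^+ 2)
   = \sum_i \sum_j (a i * b j - a j * b i) ^+ 2.
  have H1 : \sum_i \sum_j (a i * b j - a j * b i) ^+ 2 =
     \sum_i \sum_j (a i ^+ 2 * b j ^+ 2) + \sum_i \sum_j (a j ^+ 2 * b i ^+ 2)
     - 2 * \sum_i \sum_j (a i * b i * (a j * b j)).
    rewrite mulr_sumr -big_split -sumrB /=; apply: eq_bigr => i _.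
    rewrite mulr_sumr -big_split -sumrB /=; apply: eq_bigr => j _.
    ring.
  rewrite H1 [X in _ + X - _]exchange_big /=.
  rewrite expr2 big_distrl /= big_distrl /=.
  rewrite mulrBr; congr (_ - _); last first.
    congr (_ * _); apply: eq_bigr => i _; rewrite big_distrr /=.
    by apply: eq_bigr => j _.
  rewrite mulr_natl mulr2n; congr (_ + _); apply: eq_bigr => i _;
  rewrite big_distrr /=; by apply: eq_bigr.
have : 0 <= 2 * ((\sum_i a i ^+ 2) * (\sum_i b i ^+ 2) - (\sum_i a i * b i) ^+ 2).
  rewrite E; apply: sumr_ge0 => i _; apply: sumr_ge0 => j _; exact: sqr_ge0.
by rewrite pmulr_rge0.
Qed.
Lemma enorm_ge0 n (v : 'rV[R]_n) : 0 <= enorm v.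
Proof. exact: sqrtr_ge0. Qed.

Lemma enormN n (v : 'rV[R]_n) : enorm (- v) = enorm v.
Proof. by rewrite /enorm; congr Num.sqrt; apply: eq_bigr => i _; rewrite mxE sqrrN. Qed.

Lemma enormB n (u v : 'rV[R]_n) : enorm (u - v) = enorm (v - u).
Proof. by rewrite -enormN opprB. Qed.

Lemma enormD n (u v : 'rV[R]_n) : enorm (u + v) <= enorm u + enorm v.
Proof.
rewrite /enorm.
set A := \sum_(i < n) (u ord0 i) ^+ 2; set B := \sum_(i < n) (v ord0 i) ^+ 2.
have A0 : 0 <= A by apply: sumr_ge0 => i _; exact: sqr_ge0.
have B0 : 0 <= B by apply: sumr_ge0 => i _; exact: sqr_ge0.
have -> : \sum_(i < n) ((u + v) ord0 i) ^+ 2 =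
   A + B + 2 * \sum_(i < n) u ord0 i * v ord0 i.
  rewrite /A /B -big_split mulr_sumr -big_split; apply: eq_bigr => i _ /=.
  rewrite mxE; ring.
have cs := @CS n (fun i => u ord0 i) (fun i => v ord0 i).
have h : \sum_(i < n) u ord0 i * v ord0 i <= Num.sqrt A * Num.sqrt B.
  rewrite -sqrtrM //; apply: (le_trans (ler_norm _)).
  by rewrite -sqrtr_sqr ler_sqrt ?mulr_ge0.
rewrite -(ger0_norm (addr_ge0 (sqrtr_ge0 A) (sqrtr_ge0 B))) -sqrtr_sqr.
rewrite ler_sqrt ?sqr_ge0 // sqrrD !sqr_sqrtr //.
have := h; nra.
Qed.

Lemma enorm_tri n (a b c : 'rV[R]_n) : enorm (a - c) <= enorm (a - b) + enorm (b - c).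
Proof. by have := @enormD n (a - b) (b - c); rewrite addrA subrK. Qed.
End Norm.

Lemma unif01 (R : realType) (P : R -> R -> Prop) :
  (forall s, 0 <= s <= 1 -> exists2 c, 0 < c &
     forall s' e, 0 <= s' <= 1 -> `|s' - s| < c -> 0 < e -> e < c -> P e s') ->
  exists2 e, 0 < e & forall s, 0 <= s <= 1 -> P e s.
Proof.
move=> loc.
have cpt : compact `[(0:R), 1] := @segment_compact R 0 1.
have := (proj1 (compact_near_coveringP _) cpt).
move=> /near_covering_withinP /(_ R (nbhs (0:R)) (fun e s => 0 < e -> P e s) _).
case.
- move=> s; rewrite /= in_itv /= => /loc [c c0 Hc].
  exists (ball s c, ball (0:R) c); first by split; exact: nbhsx_ballx.
  case=> a b [/= ha hb]; rewrite in_itv /= => ha01 b0.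
  apply: Hc => //.
  + by move: ha; rewrite /ball /= distrC.
  + by move: hb; rewrite /ball /= sub0r normrN gtr0_norm.
- move=> c /= c0 Hc.
  exists (c / 2); first by rewrite divr_gt0.
  move=> s s01; apply: Hc; rewrite /= ?in_itv //= ?divr_gt0 //.
  rewrite /ball /= sub0r normrN gtr0_norm ?divr_gt0 //.
  by rewrite ltr_pdivrMr // ltr_pMr // ltr1n.
Qed.

Theorem lemma6 (R : realType) (nx nu nr mx mu : nat)
  (f : 'rV[R]_nx -> 'rV[R]_nu -> 'rV[R]_nx)
  (hx : 'rV[R]_nx -> 'rV[R]_mx) (hu : 'rV[R]_nu -> 'rV[R]_mu)
  (Rset : 'rV[R]_nr -> Prop)
  (xbar : 'rV[R]_nr -> 'rV[R]_nx) (ubar : 'rV[R]_nr -> 'rV[R]_nu)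
  (eps : R) (N : nat)
  (ell : 'rV[R]_nx -> 'rV[R]_nu -> 'rV[R]_nr -> R)
  (Tset : 'rV[R]_nx -> 'rV[R]_nr -> Prop)
  (V : 'rV[R]_nx -> 'rV[R]_nr -> R)
  (zeta : 'rV[R]_nx -> 'rV[R]_nr -> traj R nx nu)
  (r : 'rV[R]_nr) (x0 : 'rV[R]_nx) (p : R -> 'rV[R]_nr)
  (x : nat -> 'rV[R]_nx) (s : nat -> R) :
  0 < eps -> (0 < N)%N ->
  A1 f hx hu Rset xbar ubar ->
  is_minimizer f hx hu Rset xbar ubar eps N ell Tset V zeta ->
  A2 f hx hu Rset xbar ubar eps N ell Tset V zeta ->
  Reps hx hu Rset xbar ubar eps r ->
  Dx f hx hu Rset xbar ubar eps N Tset r x0 ->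
  (* (A3): p is the feasible path returned by the planner *)
  feasible_path f hx hu Rset xbar ubar eps N Tset x0 r p ->
  (* closed loop PathFG+MPC *)
  x 0%N = x0 -> s 0%N = 0 ->
  (forall k, is_g Tset p ((zeta (x k) (p (s k))).1 N) (s k.+1)) ->
  (forall k, x k.+1 = f (x k) ((zeta (x k) (p (s k))).2 0%N)) ->
  exists delta alpha, 0 < delta /\ 0 < alpha /\
    forall k, enorm ((zeta (x k) (p (s k))).1 N - xbar (p (s k))) <= delta ->
      (1 - s k > alpha -> s k.+1 - s k >= alpha) /\
      (1 - s k <= alpha -> s k.+1 = 1).
Proof.
move=> eps0 N0 hA1 hmin hA2 hr hDx hp hx0 hs0 hg hxd.
case: hA1 => _ [_ [_ [xcont _]]].
have hint : forall r, Reps hx hu Rset xbar ubar eps r -> in_int_T Tset (xbar r) r.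
  by case: hA2 => _ [_ [_ [_ [_ [_ [_ [_ [H _]]]]]]]].
case: hp => pcont [pReps _].
pose P := fun e s1 => forall xi t, enorm (xi - xbar (p s1)) <= e -> 0 <= t <= 1 ->
   s1 <= t <= s1 + e -> Tset xi (p t).
have [e0 e00 He0] : exists2 e, 0 < e & forall s1, 0 <= s1 <= 1 -> P e s1.
  apply: unif01 => s1 s01.
  have Rs : Rset (p s1) by case: (pReps s1 s01).
  have [E E0 HE] := hint _ (pReps s1 s01).
  have [d1 d10 Hd1] := pcont s1 s01 (E / 4) (divr_gt0 E0 (ltr0n _ 4)).
  have [d2 d20 Hd2] := xcont (p s1) Rs (E / 4) (divr_gt0 E0 (ltr0n _ 4)).
  have [d3 d30 Hd3] := pcont s1 s01 d2 d20.
  pose c := Num.min (Num.min d1 d3) (E / 4).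
  have c0 : 0 < c by rewrite !lt_min d10 d30 divr_gt0.
  exists (c / 2); first by rewrite divr_gt0.
  move=> s1' e s1'01 hs' e0 ec xi t hxi t01 /andP [st ts].
  have hc1 : c <= d1 by rewrite /c !ge_min lexx.
  have hc3 : c <= d3 by rewrite /c !ge_min lexx orbT.
  have hc4 : c <= E / 4 by rewrite /c !ge_min lexx orbT.
  apply: HE.
  have h1 : enorm (p t - p s1) < E / 4.
    move: (hs'); rewrite ltr_norml => /andP [l1 l2].
    rewrite enormB; apply: Hd1 => //.
    rewrite ltr_norml; apply/andP; split; lra.
  have h2 : enorm (xbar (p s1) - xbar (p s1')) < E / 4.
    apply: Hd2; first by case: (pReps s1' s1'01).
    move: (hs'); rewrite ltr_norml => /andP [l1 l2].
    by apply: Hd3 => //; rewrite ltr_norml; apply/andP; split; lra.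
  have h3 := @enorm_tri R nx xi (xbar (p s1')) (xbar (p s1)).
  rewrite (@enormB R nx (xbar (p s1'))) in h3.
  lra.
exists e0, e0; split => //; split => //.
move=> k hk.
have sk01 : 0 <= s k <= 1.
  case: k hk => [|k] _; first by rewrite hs0 lexx ler01.
  by case: (hg k).
have [sk1 [Tsk1 maxk]] := hg k.
have [sk0 sk1'] : 0 <= s k /\ s k <= 1 by move/andP: sk01.
split.
- move=> hlt.
  have t01 : 0 <= s k + e0 <= 1 by apply/andP; split; lra.
  have st : s k <= s k + e0 <= s k + e0 by apply/andP; split; lra.
  have := maxk _ t01 (He0 _ sk01 _ _ hk t01 st).
  lra.
- move=> hle.
  have t01 : 0 <= (1:R) <= 1 by apply/andP; split; lra.
  have st : s k <= 1 <= s k + e0 by apply/andP; split; lra.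
  have h2 := maxk _ t01 (He0 _ sk01 _ _ hk t01 st).
  move: sk1 => /andP [_ h1].
  by apply/eqP; rewrite eq_le h1 h2.
Qed.
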